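(* For all $0<x<\pi/2$, \[ \frac{P(x)}{(\pi^2-4x^2)^2}<x\sec^2x-\tan x<\frac{Q(x)}{(\pi^2-4x^2)^2}, \] where \[ P(x)=\frac{2\pi^4}{3}x^3+\frac{8\pi^2(\pi^2-10)}{15}x^5+\frac{2(322560+1680\pi^4-672\pi^6+17\pi^8)}{315\pi^4}x^7+\frac{16(168-17\pi^2)}{315}x^9+\frac{32(17\pi^8-161280)}{315\pi^8}x^{11} \] and \[ Q(x)=\frac{2\pi^4}{3}x^3+\frac{32(156-6\pi^2-\pi^4)}{3\pi^2}x^5+\frac{64(-657+37\pi^2+3\pi^4)}{3\pi^4}x^7+\frac{512(285-19\pi^2-\pi^4)}{3\pi^6}x^9+\frac{512(-354+26\pi^2+\pi^4)}{3\pi^8}x^{11}. \] *)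

(* Defs.v *)
From Stdlib Require Import Reals Lra.
Open Scope R_scope.

Definition P_low (x : R) : R :=
  2 * PI ^ 4 / 3 * x ^ 3
  + 8 * PI ^ 2 * (PI ^ 2 - 10) / 15 * x ^ 5
  + 2 * (322560 + 1680 * PI ^ 4 - 672 * PI ^ 6 + 17 * PI ^ 8) / (315 * PI ^ 4) * x ^ 7
  + 16 * (168 - 17 * PI ^ 2) / 315 * x ^ 9
  + 32 * (17 * PI ^ 8 - 161280) / (315 * PI ^ 8) * x ^ 11.

Definition Q_up (x : R) : R :=
  2 * PI ^ 4 / 3 * x ^ 3
  + 32 * (156 - 6 * PI ^ 2 - PI ^ 4) / (3 * PI ^ 2) * x ^ 5
  + 64 * (-657 + 37 * PI ^ 2 + 3 * PI ^ 4) / (3 * PI ^ 4) * x ^ 7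
  + 512 * (285 - 19 * PI ^ 2 - PI ^ 4) / (3 * PI ^ 6) * x ^ 9
  + 512 * (-354 + 26 * PI ^ 2 + PI ^ 4) / (3 * PI ^ 8) * x ^ 11.

Definition sec2 (x : R) : R := 1 / (cos x) ^ 2.

(* Main.v *)
Require Import Defs.
From Stdlib Require Import Reals Lra Lia Factorial.
Open Scope R_scope.

Ltac destruct_all := repeat match goal with H : _ /\ _ |- _ => destruct H end.

Fixpoint Rfact (n : nat) : R := match n with O => 1 | S m => IZR (Z.of_nat (S m)) * Rfact m end.
Lemma INR_fact_R n : INR (fact n) = Rfact n.
Proof. induction n; simpl Rfact. reflexivity. rewrite fact_simpl, mult_INR, IHn, INR_IZR_INZ. reflexivity. Qed.

Definition S13 (u:R) := u - u^3/6 + u^5/120 - u^7/5040 + u^9/362880 - u^11/39916800 + u^13/6227020800.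
Definition S11 (u:R) := u - u^3/6 + u^5/120 - u^7/5040 + u^9/362880 - u^11/39916800.
Definition C12 (u:R) := 1 - u^2/2 + u^4/24 - u^6/720 + u^8/40320 - u^10/3628800 + u^12/479001600.
Definition C10 (u:R) := 1 - u^2/2 + u^4/24 - u^6/720 + u^8/40320 - u^10/3628800.

Lemma sin_up u : 0 <= u -> u <= PI -> sin u <= S13 u.
Proof.
intros h1 h2. destruct (sin_bound u 2 h1 h2) as [_ H].
replace (S13 u) with (sin_approx u (2*(2+1))); [exact H|].
unfold S13, sin_approx, sin_term. cbn [sum_f_R0 Nat.mul Nat.add]. rewrite !INR_fact_R. cbn [Rfact Z.of_nat Pos.of_succ_nat Pos.succ]. field.
Qed.
Lemma sin_lo u : 0 <= u -> u <= PI -> S11 u <= sin u.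
Proof.
intros h1 h2. destruct (sin_bound u 2 h1 h2) as [H _].
replace (S11 u) with (sin_approx u (2*2+1)); [exact H|].
unfold S11, sin_approx, sin_term. cbn [sum_f_R0 Nat.mul Nat.add]. rewrite !INR_fact_R. cbn [Rfact Z.of_nat Pos.of_succ_nat Pos.succ]. field.
Qed.
Lemma cos_up u : - PI/2 <= u -> u <= PI/2 -> cos u <= C12 u.
Proof.
intros h1 h2. destruct (cos_bound u 2 h1 h2) as [_ H].
replace (C12 u) with (cos_approx u (2*(2+1))); [exact H|].
unfold C12, cos_approx, cos_term. cbn [sum_f_R0 Nat.mul Nat.add]. rewrite !INR_fact_R. cbn [Rfact Z.of_nat Pos.of_succ_nat Pos.succ]. field.
Qed.
Lemma cos_lo u : - PI/2 <= u -> u <= PI/2 -> C10 u <= cos u.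
Proof.
intros h1 h2. destruct (cos_bound u 2 h1 h2) as [H _].
replace (C10 u) with (cos_approx u (2*2+1)); [exact H|].
unfold C10, cos_approx, cos_term. cbn [sum_f_R0 Nat.mul Nat.add]. rewrite !INR_fact_R. cbn [Rfact Z.of_nat Pos.of_succ_nat Pos.succ]. field.
Qed.

Lemma pi_bnd : 3.1415926535897 <= PI <= 3.1415926535898.
Proof.
destruct (PI_2_3_7_ineq 8) as [H1 H2].
unfold tg_alt, PI_2_3_7_tg, Ratan_seq in *. cbn [sum_f_R0 Nat.mul Nat.add] in *.
rewrite !INR_IZR_INZ in *. cbn [Z.of_nat Pos.of_succ_nat Pos.succ pow] in *.
split; lra.
Qed.

Lemma PI_neq0 : PI <> 0.
Proof. pose proof PI_RGT_0; lra. Qed.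

Lemma pow_bounds : 31.0062766802970594952525473 <= PI^3 <= 31.0062766803000203765728741 /\ 306.0196847852360418932638139 <= PI^5 <= 306.0196847852847464387808125 /\ 3020.2932277761645983613300851 <= PI^7 <= 3020.2932277768375707968327427 /\ 29809.0993334382494021072610282 <= PI^9 <= 29809.0993334467890800217236046 /\ 294204.0179737945495059571862038 <= PI^11 <= 294204.0179738975623581808633491 /\ 2903677.2706121630983003957306602 <= PI^13 <= 2903677.2706133646482363759186558 /\ 28658145.9693752403951244763607233 <= PI^15 <= 28658145.9693889236518971052539173 /\ 282844563.5863903472346145959094457 <= PI^17 <= 282844563.5865434020100475487802604 /\ 2791563949.5962714142032060336325947 <= PI^19 <= 2791563949.5979597207690410157979362 /\ 27551631842.8561174271563053031764207 <= PI^21 <= 27551631842.8745343364280739025501914 /\ 271923706893.4303120394218535075819864 <= PI^23 <= 271923706893.6293908490633503137994300.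
Proof.
destruct pi_bnd as [l h].
repeat split.
  - apply Rle_trans with (3.1415926535897^3); [cbn [pow]; lra| apply pow_incr; lra].
  - apply Rle_trans with (3.1415926535898^3); [apply pow_incr; lra| cbn [pow]; lra].
  - apply Rle_trans with (3.1415926535897^5); [cbn [pow]; lra| apply pow_incr; lra].
  - apply Rle_trans with (3.1415926535898^5); [apply pow_incr; lra| cbn [pow]; lra].
  - apply Rle_trans with (3.1415926535897^7); [cbn [pow]; lra| apply pow_incr; lra].
  - apply Rle_trans with (3.1415926535898^7); [apply pow_incr; lra| cbn [pow]; lra].
  - apply Rle_trans with (3.1415926535897^9); [cbn [pow]; lra| apply pow_incr; lra].
  - apply Rle_trans with (3.1415926535898^9); [apply pow_incr; lra| cbn [pow]; lra].
  - apply Rle_trans with (3.1415926535897^11); [cbn [pow]; lra| apply pow_incr; lra].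
  - apply Rle_trans with (3.1415926535898^11); [apply pow_incr; lra| cbn [pow]; lra].
  - apply Rle_trans with (3.1415926535897^13); [cbn [pow]; lra| apply pow_incr; lra].
  - apply Rle_trans with (3.1415926535898^13); [apply pow_incr; lra| cbn [pow]; lra].
  - apply Rle_trans with (3.1415926535897^15); [cbn [pow]; lra| apply pow_incr; lra].
  - apply Rle_trans with (3.1415926535898^15); [apply pow_incr; lra| cbn [pow]; lra].
  - apply Rle_trans with (3.1415926535897^17); [cbn [pow]; lra| apply pow_incr; lra].
  - apply Rle_trans with (3.1415926535898^17); [apply pow_incr; lra| cbn [pow]; lra].
  - apply Rle_trans with (3.1415926535897^19); [cbn [pow]; lra| apply pow_incr; lra].
  - apply Rle_trans with (3.1415926535898^19); [apply pow_incr; lra| cbn [pow]; lra].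
  - apply Rle_trans with (3.1415926535897^21); [cbn [pow]; lra| apply pow_incr; lra].
  - apply Rle_trans with (3.1415926535898^21); [apply pow_incr; lra| cbn [pow]; lra].
  - apply Rle_trans with (3.1415926535897^23); [cbn [pow]; lra| apply pow_incr; lra].
  - apply Rle_trans with (3.1415926535898^23); [apply pow_incr; lra| cbn [pow]; lra].
Qed.

Lemma AL_bern (t:R) : 0 < t -> t <= 1 -> 0 < ((-1/4) * PI^3 + (17/645120) * PI^11) * (t^0 * (1-t)^16) + ((-4) * PI^3 + (17/40320) * PI^11) * (t^1 * (1-t)^15) + ((-30) * PI^3 + (1/64) * PI^5 + (4063/1290240) * PI^11 + (-29/92897280) * PI^13) * (t^2 * (1-t)^14) + ((-140) * PI^3 + (7/32) * PI^5 + (1343/92160) * PI^11 + (-29/6635520) * PI^13) * (t^3 * (1-t)^13) + ((-58239/128) * PI^3 + (91/64) * PI^5 + (-1/3072) * PI^7 + (482681/10321920) * PI^11 + (-5249/185794560) * PI^13 + (-1/145981440) * PI^15) * (t^4 * (1-t)^12) + ((-34941/32) * PI^3 + (91/16) * PI^5 + (-1/256) * PI^7 + (284699/2580480) * PI^11 + (-5191/46448640) * PI^13 + (-1/12165120) * PI^15) * (t^5 * (1-t)^11) + ((-128095/64) * PI^3 + (32031/2048) * PI^5 + (-11/512) * PI^7 + (1/368640) * PI^9 + (113509/573440) * PI^11 + (-49909/165150720) * PI^13 + (-131/291962880) * PI^15 + (4861/51011754393600) * PI^17) * (t^6 * (1-t)^10) + ((-91465/32) * PI^3 + (32027/1024)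 * PI^5 + (-55/768) * PI^7 + (1/36864) * PI^9 + (33847/122880) * PI^11 + (-20909/35389440) * PI^13 + (-43/29196288) * PI^15 + (4861/5101175439360) * PI^17) * (t^7 * (1-t)^9) + ((-411345/128) * PI^3 + (96051/2048) * PI^5 + (-15839/98304) * PI^7 + (1/8192) * PI^9 + (4961035/16515072) * PI^11 + (-426619/495452160) * PI^13 + (-7561/2335703040) * PI^15 + (432629/102023508787200) * PI^17 + (-6637/13184576520192000) * PI^19) * (t^8 * (1-t)^8) + ((-45661/16) * PI^3 + (13713/256) * PI^5 + (-3167/12288) * PI^7 + (1/3072) * PI^9 + (2658391/10321920) * PI^11 + (-58841/61931520) * PI^13 + (-293/58392576) * PI^15 + (140969/12752938598400) * PI^17 + (-6637/1648072065024000) * PI^19) * (t^9 * (1-t)^7) + ((-63833/32) * PI^3 + (47943/1024) * PI^5 + (-7385/24576) * PI^7 + (6719/11796480) * PI^9 + (34009/196608) * PI^11 + (-23702279/29727129600) * PI^13 + (-3283/583925760) * PI^15 + (15248957/816188070297600) * PI^17 + (-6637/479439146188800) * PI^19 + (53/35158870720512000) * PI^21) * (t^10 * (1-t)^6) + ((-17373/16) * PI^3 + (15953/512) * PI^5 + (-3161/12288) * PI^7 + (1343/1966080) * PI^9 + (929281/10321920) * PI^11 + (-7524917/14863564800) * PI^13 + (-1339/291962880) * PI^15 + (1745099/81618807029760) * PI^17 + (-351761/13184576520192000) * PI^19 + (53/5859811786752000) * PI^21) * (t^11 * (1-t)^5) + ((-57745/128) * PI^3 + (15911/1024) * PI^5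 + (-7885/49152) * PI^7 + (149/262144) * PI^9 + (18806285/528482304) * PI^11 + (-1422853/5945425920) * PI^13 + (-42403201/15695924428800) * PI^15 + (2736743/163237614059520) * PI^17 + (-86281/2739652263936000) * PI^19 + (1537/70317741441024000) * PI^21 + (-17/5062877383753728000) * PI^23) * (t^12 * (1-t)^4) + ((-4425/32) * PI^3 + (1441/256) * PI^5 + (-291/4096) * PI^7 + (191/589824) * PI^9 + (6819137/660602880) * PI^11 + (-8089/99090432) * PI^13 + (-4394881/3923981107200) * PI^15 + (1813153/204047017574400) * PI^17 + (-245569/10547661216153600) * PI^19 + (53/1953270595584000) * PI^21 + (-17/1265719345938432000) * PI^23) * (t^13 * (1-t)^3) + ((-1887/64) * PI^3 + (2867/2048) * PI^5 + (-521/24576) * PI^7 + (95/786432) * PI^9 + (304107/146800640) * PI^11 + (-2006489/105696460800) * PI^13 + (-810881/2615987404800) * PI^15 + (354853/116598295756800) * PI^17 + (-1108379/105476612161536000) * PI^19 + (10229/562541931528192000) * PI^21 + (-17/920523160682496000) * PI^23) * (t^14 * (1-t)^2) + ((-125/32) * PI^3 + (219/1024) * PI^5 + (-47/12288) * PI^7 + (157/5898240) * PI^9 + (11311/44040192) * PI^11 + (-36587/13589544960) * PI^13 + (-201601/3923981107200) * PI^15 + (82637/136031345049600) * PI^17 + (-6637/2511347908608000) * PI^19 + (53/8523362598912000) * PI^21 + (-17/1687625794584576000) * PI^23) * (t^15 * (1-t)^1) + ((-31/128) * PI^3 + (31/2048) * PI^5 + (-31/98304) * PI^7 + (31/11796480)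 * PI^9 + (5591/377487360) * PI^11 + (-167009/951268147200) * PI^13 + (-1935391/502269581721600) * PI^15 + (4861/90687563366400) * PI^17 + (-6637/23439247147008000) * PI^19 + (53/62504659058688000) * PI^21 + (-17/9000670904451072000) * PI^23) * (t^16 * (1-t)^0).
Proof.
intros ht0 ht1. pose proof pow_bounds as PB. destruct_all.
apply Rplus_le_lt_0_compat; [repeat apply Rplus_le_le_0_compat|].
  - apply Rmult_le_pos; [lra| apply Rmult_le_pos; apply pow_le; lra].
  - apply Rmult_le_pos; [lra| apply Rmult_le_pos; apply pow_le; lra].
  - apply Rmult_le_pos; [lra| apply Rmult_le_pos; apply pow_le; lra].
  - apply Rmult_le_pos; [lra| apply Rmult_le_pos; apply pow_le; lra].
  - apply Rmult_le_pos; [lra| apply Rmult_le_pos; apply pow_le; lra].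
  - apply Rmult_le_pos; [lra| apply Rmult_le_pos; apply pow_le; lra].
  - apply Rmult_le_pos; [lra| apply Rmult_le_pos; apply pow_le; lra].
  - apply Rmult_le_pos; [lra| apply Rmult_le_pos; apply pow_le; lra].
  - apply Rmult_le_pos; [lra| apply Rmult_le_pos; apply pow_le; lra].
  - apply Rmult_le_pos; [lra| apply Rmult_le_pos; apply pow_le; lra].
  - apply Rmult_le_pos; [lra| apply Rmult_le_pos; apply pow_le; lra].
  - apply Rmult_le_pos; [lra| apply Rmult_le_pos; apply pow_le; lra].
  - apply Rmult_le_pos; [lra| apply Rmult_le_pos; apply pow_le; lra].
  - apply Rmult_le_pos; [lra| apply Rmult_le_pos; apply pow_le; lra].
  - apply Rmult_le_pos; [lra| apply Rmult_le_pos; apply pow_le; lra].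
  - apply Rmult_le_pos; [lra| apply Rmult_le_pos; apply pow_le; lra].
  - apply Rmult_lt_0_compat; [lra| apply Rmult_lt_0_compat; [apply pow_lt; lra| simpl; lra]].
Qed.

Lemma AL_id (t:R) : let x := PI*t/4 in let u := PI*t/2 in (PI^2-4*x^2)^2 * (u - S13 u) - P_low x * (1 + C12 u) = t^7 * (((-1/4) * PI^3 + (17/645120) * PI^11) * (t^0 * (1-t)^16) + ((-4) * PI^3 + (17/40320) * PI^11) * (t^1 * (1-t)^15) + ((-30) * PI^3 + (1/64) * PI^5 + (4063/1290240) * PI^11 + (-29/92897280) * PI^13) * (t^2 * (1-t)^14) + ((-140) * PI^3 + (7/32) * PI^5 + (1343/92160) * PI^11 + (-29/6635520) * PI^13) * (t^3 * (1-t)^13) + ((-58239/128) * PI^3 + (91/64) * PI^5 + (-1/3072) * PI^7 + (482681/10321920) * PI^11 + (-5249/185794560) * PI^13 + (-1/145981440) * PI^15) * (t^4 * (1-t)^12) + ((-34941/32) * PI^3 + (91/16) * PI^5 + (-1/256) * PI^7 + (284699/2580480) * PI^11 + (-5191/46448640) * PI^13 + (-1/12165120) * PI^15) * (t^5 * (1-t)^11) + ((-128095/64) * PI^3 + (32031/2048) * PI^5 + (-11/512) * PI^7 + (1/368640) * PI^9 + (113509/573440) * PI^11 + (-49909/165150720) * PI^13 + (-131/291962880) * PI^15 + (4861/51011754393600) * PI^17) * (t^6 * (1-t)^10) + ((-91465/32) * PI^3 + (32027/1024) * PI^5 + (-55/768) * PI^7 + (1/36864) * PI^9 + (33847/122880)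 * PI^11 + (-20909/35389440) * PI^13 + (-43/29196288) * PI^15 + (4861/5101175439360) * PI^17) * (t^7 * (1-t)^9) + ((-411345/128) * PI^3 + (96051/2048) * PI^5 + (-15839/98304) * PI^7 + (1/8192) * PI^9 + (4961035/16515072) * PI^11 + (-426619/495452160) * PI^13 + (-7561/2335703040) * PI^15 + (432629/102023508787200) * PI^17 + (-6637/13184576520192000) * PI^19) * (t^8 * (1-t)^8) + ((-45661/16) * PI^3 + (13713/256) * PI^5 + (-3167/12288) * PI^7 + (1/3072) * PI^9 + (2658391/10321920) * PI^11 + (-58841/61931520) * PI^13 + (-293/58392576) * PI^15 + (140969/12752938598400) * PI^17 + (-6637/1648072065024000) * PI^19) * (t^9 * (1-t)^7) + ((-63833/32) * PI^3 + (47943/1024) * PI^5 + (-7385/24576) * PI^7 + (6719/11796480) * PI^9 + (34009/196608) * PI^11 + (-23702279/29727129600) * PI^13 + (-3283/583925760) * PI^15 + (15248957/816188070297600) * PI^17 + (-6637/479439146188800) * PI^19 + (53/35158870720512000) * PI^21) * (t^10 * (1-t)^6) + ((-17373/16) * PI^3 + (15953/512) * PI^5 + (-3161/12288) * PI^7 + (1343/1966080) * PI^9 + (929281/10321920) * PI^11 + (-7524917/14863564800) * PI^13 + (-1339/291962880) * PI^15 + (1745099/81618807029760) * PI^17 + (-351761/13184576520192000) * PI^19 + (53/5859811786752000) * PI^21) * (t^11 * (1-t)^5) + ((-57745/128) * PI^3 + (15911/1024) * PI^5 + (-7885/49152) * PI^7 + (149/262144) * PI^9 + (18806285/528482304) *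 PI^11 + (-1422853/5945425920) * PI^13 + (-42403201/15695924428800) * PI^15 + (2736743/163237614059520) * PI^17 + (-86281/2739652263936000) * PI^19 + (1537/70317741441024000) * PI^21 + (-17/5062877383753728000) * PI^23) * (t^12 * (1-t)^4) + ((-4425/32) * PI^3 + (1441/256) * PI^5 + (-291/4096) * PI^7 + (191/589824) * PI^9 + (6819137/660602880) * PI^11 + (-8089/99090432) * PI^13 + (-4394881/3923981107200) * PI^15 + (1813153/204047017574400) * PI^17 + (-245569/10547661216153600) * PI^19 + (53/1953270595584000) * PI^21 + (-17/1265719345938432000) * PI^23) * (t^13 * (1-t)^3) + ((-1887/64) * PI^3 + (2867/2048) * PI^5 + (-521/24576) * PI^7 + (95/786432) * PI^9 + (304107/146800640) * PI^11 + (-2006489/105696460800) * PI^13 + (-810881/2615987404800) * PI^15 + (354853/116598295756800) * PI^17 + (-1108379/105476612161536000) * PI^19 + (10229/562541931528192000) * PI^21 + (-17/920523160682496000) * PI^23) * (t^14 * (1-t)^2) + ((-125/32) * PI^3 + (219/1024) * PI^5 + (-47/12288) * PI^7 + (157/5898240) * PI^9 + (11311/44040192) * PI^11 + (-36587/13589544960) * PI^13 + (-201601/3923981107200) * PI^15 + (82637/136031345049600) * PI^17 + (-6637/2511347908608000) * PI^19 + (53/8523362598912000) * PI^21 + (-17/1687625794584576000) * PI^23) * (t^15 * (1-t)^1) + ((-31/128) * PI^3 + (31/2048) * PI^5 + (-31/98304) * PI^7 + (31/11796480) * PI^9 + (5591/377487360) * PI^11 + (-167009/951268147200) * PI^13 +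 (-1935391/502269581721600) * PI^15 + (4861/90687563366400) * PI^17 + (-6637/23439247147008000) * PI^19 + (53/62504659058688000) * PI^21 + (-17/9000670904451072000) * PI^23) * (t^16 * (1-t)^0)).
Proof.
unfold P_low, Q_up, S13, S11, C12, C10. field. exact PI_neq0.
Qed.

Lemma AU_bern (t:R) : 0 < t -> t <= 1 -> 0 < ((13/4) * PI^3 + (-1/8) * PI^5 + (-1/96) * PI^7 + (-1/960) * PI^9) * (t^0 * (1-t)^16) + ((52) * PI^3 + (-2) * PI^5 + (-1/6) * PI^7 + (-1/60) * PI^9) * (t^1 * (1-t)^15) + ((49701/128) * PI^3 + (-5801/384) * PI^5 + (-949/768) * PI^7 + (-317/2560) * PI^9 + (11/430080) * PI^11) * (t^2 * (1-t)^14) + ((114947/64) * PI^3 + (-13727/192) * PI^5 + (-721/128) * PI^7 + (-2177/3840) * PI^9 + (11/30720) * PI^11) * (t^3 * (1-t)^13) + ((1474477/256) * PI^3 + (-1456951/6144) * PI^5 + (-108491/6144) * PI^7 + (-109967/61440) * PI^9 + (2969/1290240) * PI^11 + (-41/185794560) * PI^13) * (t^4 * (1-t)^12) + ((868971/64) * PI^3 + (-896837/1536) * PI^5 + (-61937/1536) * PI^7 + (-21151/5120) * PI^9 + (967/107520) * PI^11 + (-41/15482880) * PI^13) * (t^5 * (1-t)^11) + ((49843845/2048) * PI^3 + (-4515733/4096) * PI^5 + (-6810907/98304) * PI^7 + (-10632083/1474560) * PI^9 + (24643/1032192) * PI^11 + (-5329/371589120) * PI^13 + (163/163499212800) * PI^15)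 * (t^6 * (1-t)^10) + ((34648121/1024) * PI^3 + (-3329809/2048) * PI^5 + (-1493869/16384) * PI^7 + (-7157887/737280) * PI^9 + (16781/368640) * PI^11 + (-1721/37158912) * PI^13 + (163/16349921280) * PI^15) * (t^7 * (1-t)^9) + ((75513753/2048) * PI^3 + (-61919837/32768) * PI^5 + (-6069171/65536) * PI^7 + (-120248789/11796480) * PI^9 + (995153/15482880) * PI^11 + (-295109/2972712960) * PI^13 + (7171/163499212800) * PI^15 + (-1/356725555200) * PI^17) * (t^8 * (1-t)^8) + ((8089219/256) * PI^3 + (-7101869/4096) * PI^5 + (-1782469/24576) * PI^7 + (-12352517/1474560) * PI^9 + (132107/1935360) * PI^11 + (-55253/371589120) * PI^13 + (2281/20437401600) * PI^15 + (-1/44590694400) * PI^17) * (t^9 * (1-t)^7) + ((21734293/1024) * PI^3 + (-10240503/8192) * PI^5 + (-22742889/524288) * PI^7 + (-63388907/11796480) * PI^9 + (434304263/7927234560) * PI^11 + (-702491/4404019200) * PI^13 + (11881/65399685120) * PI^15 + (-1/13212057600) * PI^17) * (t^10 * (1-t)^6) + ((5661363/512) * PI^3 + (-8599981/12288) * PI^5 + (-15261937/786432) * PI^7 + (-3143125/1179648) * PI^9 + (131084053/3963617280) * PI^11 + (-7339211/59454259200) * PI^13 + (32279/163499212800) * PI^15 + (-1/7134511104) * PI^17) * (t^11 * (1-t)^5) + ((4485113/1024) * PI^3 + (-14646893/49152) * PI^5 + (-3278839/524288) * PI^7 + (-63058919/62914560) * PI^9 + (46873319/3170893824) * PI^11 +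 (-65055001/951268147200) * PI^13 + (4551373/31391848857600) * PI^15 + (-443/2853804441600) * PI^17) * (t^12 * (1-t)^4) + ((326503/256) * PI^3 + (-1145369/12288) * PI^5 + (-177373/131072) * PI^7 + (-13065941/47185920) * PI^9 + (3761867/792723456) * PI^11 + (-6290761/237817036800) * PI^13 + (557581/7847962214400) * PI^15 + (-1/9512681472) * PI^17) * (t^13 * (1-t)^3) + ((527361/2048) * PI^3 + (-496175/24576) * PI^5 + (-264965/1572864) * PI^7 + (-5008759/94371840) * PI^9 + (131237647/126835752960) * PI^11 + (-1612979/237817036800) * PI^13 + (2793289/125567395430400) * PI^15 + (-1/23488102400) * PI^17) * (t^14 * (1-t)^2) + ((32985/1024) * PI^3 + (-11079/4096) * PI^5 + (-5249/786432) * PI^7 + (-6625/1048576) * PI^9 + (580193/4227858432) * PI^11 + (-1759/1698693120) * PI^13 + (84179/20927899238400) * PI^15 + (-1/105696460800) * PI^17) * (t^15 * (1-t)^1) + ((3853/2048) * PI^3 + (-5533/32768) * PI^5 + (829/1572864) * PI^7 + (-13313/37748736) * PI^9 + (353389/42278584320) * PI^11 + (-1084213/15220290355200) * PI^13 + (17821/55807731302400) * PI^15 + (-1/1127428915200) * PI^17) * (t^16 * (1-t)^0).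
Proof.
intros ht0 ht1. pose proof pow_bounds as PB. destruct_all.
apply Rplus_le_lt_0_compat; [repeat apply Rplus_le_le_0_compat|].
  - apply Rmult_le_pos; [lra| apply Rmult_le_pos; apply pow_le; lra].
  - apply Rmult_le_pos; [lra| apply Rmult_le_pos; apply pow_le; lra].
  - apply Rmult_le_pos; [lra| apply Rmult_le_pos; apply pow_le; lra].
  - apply Rmult_le_pos; [lra| apply Rmult_le_pos; apply pow_le; lra].
  - apply Rmult_le_pos; [lra| apply Rmult_le_pos; apply pow_le; lra].
  - apply Rmult_le_pos; [lra| apply Rmult_le_pos; apply pow_le; lra].
  - apply Rmult_le_pos; [lra| apply Rmult_le_pos; apply pow_le; lra].
  - apply Rmult_le_pos; [lra| apply Rmult_le_pos; apply pow_le; lra].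
  - apply Rmult_le_pos; [lra| apply Rmult_le_pos; apply pow_le; lra].
  - apply Rmult_le_pos; [lra| apply Rmult_le_pos; apply pow_le; lra].
  - apply Rmult_le_pos; [lra| apply Rmult_le_pos; apply pow_le; lra].
  - apply Rmult_le_pos; [lra| apply Rmult_le_pos; apply pow_le; lra].
  - apply Rmult_le_pos; [lra| apply Rmult_le_pos; apply pow_le; lra].
  - apply Rmult_le_pos; [lra| apply Rmult_le_pos; apply pow_le; lra].
  - apply Rmult_le_pos; [lra| apply Rmult_le_pos; apply pow_le; lra].
  - apply Rmult_le_pos; [lra| apply Rmult_le_pos; apply pow_le; lra].
  - apply Rmult_lt_0_compat; [lra| apply Rmult_lt_0_compat; [apply pow_lt; lra| simpl; lra]].
Qed.

Lemma AU_id (t:R) : let x := PI*t/4 in let u := PI*t/2 in Q_up x * (1 + C10 u) - (PI^2-4*x^2)^2 * (u - S11 u) = t^5 * (((13/4) * PI^3 + (-1/8) * PI^5 + (-1/96) * PI^7 + (-1/960) * PI^9) * (t^0 * (1-t)^16) + ((52) * PI^3 + (-2) * PI^5 + (-1/6) * PI^7 + (-1/60) * PI^9) * (t^1 * (1-t)^15) + ((49701/128) * PI^3 + (-5801/384) * PI^5 + (-949/768) * PI^7 + (-317/2560) * PI^9 + (11/430080) * PI^11) * (t^2 * (1-t)^14) + ((114947/64) * PI^3 + (-13727/192) * PI^5 + (-721/128) * PI^7 + (-2177/3840) * PI^9 + (11/30720) * PI^11) * (t^3 * (1-t)^13) + ((1474477/256) * PI^3 + (-1456951/6144) * PI^5 +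 (-108491/6144) * PI^7 + (-109967/61440) * PI^9 + (2969/1290240) * PI^11 + (-41/185794560) * PI^13) * (t^4 * (1-t)^12) + ((868971/64) * PI^3 + (-896837/1536) * PI^5 + (-61937/1536) * PI^7 + (-21151/5120) * PI^9 + (967/107520) * PI^11 + (-41/15482880) * PI^13) * (t^5 * (1-t)^11) + ((49843845/2048) * PI^3 + (-4515733/4096) * PI^5 + (-6810907/98304) * PI^7 + (-10632083/1474560) * PI^9 + (24643/1032192) * PI^11 + (-5329/371589120) * PI^13 + (163/163499212800) * PI^15) * (t^6 * (1-t)^10) + ((34648121/1024) * PI^3 + (-3329809/2048) * PI^5 + (-1493869/16384) * PI^7 + (-7157887/737280) * PI^9 + (16781/368640) * PI^11 + (-1721/37158912) * PI^13 + (163/16349921280) * PI^15) * (t^7 * (1-t)^9) + ((75513753/2048) * PI^3 + (-61919837/32768) * PI^5 + (-6069171/65536) * PI^7 + (-120248789/11796480) * PI^9 + (995153/15482880) * PI^11 + (-295109/2972712960) * PI^13 + (7171/163499212800) * PI^15 + (-1/356725555200) * PI^17) * (t^8 * (1-t)^8) + ((8089219/256) * PI^3 + (-7101869/4096) * PI^5 + (-1782469/24576) * PI^7 + (-12352517/1474560) * PI^9 + (132107/1935360) * PI^11 + (-55253/371589120) * PI^13 + (2281/20437401600) * PI^15 + (-1/44590694400) * PI^17) * (t^9 * (1-t)^7) + ((21734293/1024) * PI^3 + (-10240503/8192) * PI^5 + (-22742889/524288) * PI^7 + (-63388907/11796480) * PI^9 + (434304263/7927234560) * PI^11 + (-702491/4404019200)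 * PI^13 + (11881/65399685120) * PI^15 + (-1/13212057600) * PI^17) * (t^10 * (1-t)^6) + ((5661363/512) * PI^3 + (-8599981/12288) * PI^5 + (-15261937/786432) * PI^7 + (-3143125/1179648) * PI^9 + (131084053/3963617280) * PI^11 + (-7339211/59454259200) * PI^13 + (32279/163499212800) * PI^15 + (-1/7134511104) * PI^17) * (t^11 * (1-t)^5) + ((4485113/1024) * PI^3 + (-14646893/49152) * PI^5 + (-3278839/524288) * PI^7 + (-63058919/62914560) * PI^9 + (46873319/3170893824) * PI^11 + (-65055001/951268147200) * PI^13 + (4551373/31391848857600) * PI^15 + (-443/2853804441600) * PI^17) * (t^12 * (1-t)^4) + ((326503/256) * PI^3 + (-1145369/12288) * PI^5 + (-177373/131072) * PI^7 + (-13065941/47185920) * PI^9 + (3761867/792723456) * PI^11 + (-6290761/237817036800) * PI^13 + (557581/7847962214400) * PI^15 + (-1/9512681472) * PI^17) * (t^13 * (1-t)^3) + ((527361/2048) * PI^3 + (-496175/24576) * PI^5 + (-264965/1572864) * PI^7 + (-5008759/94371840) * PI^9 + (131237647/126835752960) * PI^11 + (-1612979/237817036800) * PI^13 + (2793289/125567395430400) * PI^15 + (-1/23488102400) * PI^17) * (t^14 * (1-t)^2) + ((32985/1024) * PI^3 + (-11079/4096) * PI^5 + (-5249/786432) * PI^7 + (-6625/1048576) * PI^9 + (580193/4227858432) * PI^11 + (-1759/1698693120) * PI^13 + (84179/20927899238400) * PI^15 + (-1/105696460800) * PI^17) * (t^15 * (1-t)^1) + ((3853/2048) * PI^3 + (-5533/32768)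 * PI^5 + (829/1572864) * PI^7 + (-13313/37748736) * PI^9 + (353389/42278584320) * PI^11 + (-1084213/15220290355200) * PI^13 + (17821/55807731302400) * PI^15 + (-1/1127428915200) * PI^17) * (t^16 * (1-t)^0)).
Proof.
unfold P_low, Q_up, S13, S11, C12, C10. field. exact PI_neq0.
Qed.

Lemma BL_bern (t:R) : 0 < t -> t <= 1 -> 0 < ((61/4) * PI^3 + (1/12) * PI^5 + (-1/24) * PI^7 + (-1/120) * PI^9 + (-17/40320) * PI^11) * (t^0 * (1-t)^17) + ((423/2) * PI^3 + (11/8) * PI^5 + (-5/8) * PI^7 + (-7/60) * PI^9 + (-221/40320) * PI^11) * (t^1 * (1-t)^16) + ((1375) * PI^3 + (497/48) * PI^5 + (-25339/5760) * PI^7 + (-2201/2880) * PI^9 + (-2377/71680) * PI^11 + (17/1935360) * PI^13) * (t^2 * (1-t)^15) + ((11125/2) * PI^3 + (9211/192) * PI^5 + (-14819/768) * PI^7 + (-7165/2304) * PI^9 + (-31963/258048) * PI^11 + (187/1935360) * PI^13) * (t^3 * (1-t)^14) + ((15673) * PI^3 + (14857/96) * PI^5 + (-1360841/23040) * PI^7 + (-5677243/645120) * PI^9 + (-353309/1105920) * PI^11 + (76021/154828800) * PI^13 + (-17/232243200) * PI^15) * (t^4 * (1-t)^13) + ((130453/4) * PI^3 + (71359/192) * PI^5 + (-3084707/23040) * PI^7 + (-23701981/1290240) * PI^9 + (-1333187/2211840) * PI^11 + (94627/61931520) * PI^13 + (-17/25804800) * PI^15) * (t^5 * (1-t)^12)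 + ((3317797/64) * PI^3 + (16603/24) * PI^5 + (-2680703/11520) * PI^7 + (-25181179/860160) * PI^9 + (-399237829/464486400) * PI^11 + (74631/22937600) * PI^13 + (-10057/3715891200) * PI^15 + (17/52022476800) * PI^17) * (t^6 * (1-t)^11) + ((8217847/128) * PI^3 + (24553/24) * PI^5 + (-3648959/11520) * PI^7 + (-62544079/1720320) * PI^9 + (-292163317/309657600) * PI^11 + (6214847/1238630400) * PI^13 + (-49919/7431782400) * PI^15 + (17/7431782400) * PI^17) * (t^7 * (1-t)^10) + ((16023051/256) * PI^3 + (1248329/1024) * PI^5 + (-7876723/23040) * PI^7 + (-1148137/32256) * PI^9 + (-1493687513/1857945600) * PI^11 + (716239/123863040) * PI^13 + (-500737/44590694400) * PI^15 + (89791/12485394432000) * PI^17 + (-17/18728091648000) * PI^19) * (t^8 * (1-t)^9) + ((24663649/512) * PI^3 + (2411487/2048) * PI^5 + (-339019/1152) * PI^7 + (-15830547/573440) * PI^9 + (-494000971/928972800) * PI^11 + (207029033/40874803200) * PI^13 + (-1190327/89181388800) * PI^15 + (15937/1189085184000) * PI^17 + (-17/3745618329600) * PI^19) * (t^9 * (1-t)^8) + ((116591/4) * PI^3 + (11316629/12288) * PI^5 + (-14900063/73728) * PI^7 + (-3122917/184320) * PI^9 + (-4490669/16588800) * PI^11 + (36999131/10899947520) * PI^13 + (-344713/29727129600) * PI^15 + (821467/49941577728000) * PI^17 + (-1003/99883155456000) * PI^19) * (t^10 * (1-t)^7) + ((1753717/128) * PI^3 + (14227415/24576) * PI^5 + (-81199729/737280)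 * PI^7 + (-8433989/1032192) * PI^9 + (-1532939/14745600) * PI^11 + (31561099/18166579200) * PI^13 + (-190030271/25505877196800) * PI^15 + (199123/14269022208000) * PI^17 + (-221/17122826649600) * PI^19) * (t^11 * (1-t)^6) + ((626063/128) * PI^3 + (885557/3072) * PI^5 + (-69414437/1474560) * PI^7 + (-252128069/82575360) * PI^9 + (-256247/8847360) * PI^11 + (109860073/163499212800) * PI^13 + (-16403753/4637432217600) * PI^15 + (238267/28538044416000) * PI^17 + (-1819/171228266496000) * PI^19) * (t^12 * (1-t)^5) + ((326291/256) * PI^3 + (909911/8192) * PI^5 + (-9120947/589824) * PI^7 + (-28523039/33030144) * PI^9 + (-10016119/1857945600) * PI^11 + (2095633/10899947520) * PI^13 + (-83281837/68015672524800) * PI^15 + (1406851/399532621824000) * PI^17 + (-221/38050725888000) * PI^19) * (t^13 * (1-t)^4) + ((14421/64) * PI^3 + (392201/12288) * PI^5 + (-347863/92160) * PI^7 + (-58774427/330301440) * PI^9 + (-15628891/29727129600) * PI^11 + (2138077/54499737600) * PI^13 + (-5101879/17003918131200) * PI^15 + (39017/38050725888000) * PI^17 + (-289/136982613196800) * PI^19) * (t^14 * (1-t)^3) + ((1469/64) * PI^3 + (158129/24576) * PI^5 + (-190535/294912) * PI^7 + (-3310165/132120576) * PI^9 + (95521/8493465600) * PI^11 + (175177/32699842560) * PI^13 + (-334759/6801567252480) * PI^15 + (313567/1598130487296000) * PI^17 + (-4709/9588782923776000) * PI^19) * (t^15 * (1-t)^2) + ((175/256) * PI^3 + (4985/6144)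 * PI^5 + (-34097/491520) * PI^7 + (-176371/82575360) * PI^9 + (1041323/118908518400) * PI^11 + (23641/54499737600) * PI^13 + (-2741/566797271040) * PI^15 + (211/9512681472000) * PI^17 + (-17/255700877967360) * PI^19) * (t^16 * (1-t)^1) + ((-31/512) * PI^3 + (1183/24576) * PI^5 + (-10399/2949120) * PI^7 + (-54113/660602880) * PI^9 + (161249/237817036800) * PI^11 + (281/18166579200) * PI^13 + (-1621/7557296947200) * PI^15 + (199/177570054144000) * PI^17 + (-17/4261681299456000) * PI^19) * (t^17 * (1-t)^0).
Proof.
intros ht0 ht1. pose proof pow_bounds as PB. destruct_all.
apply Rplus_le_lt_0_compat; [repeat apply Rplus_le_le_0_compat|].
  - apply Rmult_le_pos; [lra| apply Rmult_le_pos; apply pow_le; lra].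
  - apply Rmult_le_pos; [lra| apply Rmult_le_pos; apply pow_le; lra].
  - apply Rmult_le_pos; [lra| apply Rmult_le_pos; apply pow_le; lra].
  - apply Rmult_le_pos; [lra| apply Rmult_le_pos; apply pow_le; lra].
  - apply Rmult_le_pos; [lra| apply Rmult_le_pos; apply pow_le; lra].
  - apply Rmult_le_pos; [lra| apply Rmult_le_pos; apply pow_le; lra].
  - apply Rmult_le_pos; [lra| apply Rmult_le_pos; apply pow_le; lra].
  - apply Rmult_le_pos; [lra| apply Rmult_le_pos; apply pow_le; lra].
  - apply Rmult_le_pos; [lra| apply Rmult_le_pos; apply pow_le; lra].
  - apply Rmult_le_pos; [lra| apply Rmult_le_pos; apply pow_le; lra].
  - apply Rmult_le_pos; [lra| apply Rmult_le_pos; apply pow_le; lra].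
  - apply Rmult_le_pos; [lra| apply Rmult_le_pos; apply pow_le; lra].
  - apply Rmult_le_pos; [lra| apply Rmult_le_pos; apply pow_le; lra].
  - apply Rmult_le_pos; [lra| apply Rmult_le_pos; apply pow_le; lra].
  - apply Rmult_le_pos; [lra| apply Rmult_le_pos; apply pow_le; lra].
  - apply Rmult_le_pos; [lra| apply Rmult_le_pos; apply pow_le; lra].
  - apply Rmult_le_pos; [lra| apply Rmult_le_pos; apply pow_le; lra].
  - apply Rmult_lt_0_compat; [lra| apply Rmult_lt_0_compat; [apply pow_lt; lra| simpl; lra]].
Qed.

Lemma BL_id (t:R) : let v := PI*t/2 in let x := (PI-v)/2 in (PI^2-4*x^2)^2 * (PI - v - S13 v) - P_low x * (1 - C10 v) = (PI*t/2)^2 * t^2 * (((61/4) * PI^3 + (1/12) * PI^5 + (-1/24) * PI^7 + (-1/120) * PI^9 + (-17/40320) * PI^11) * (t^0 * (1-t)^17) + ((423/2) * PI^3 + (11/8) * PI^5 + (-5/8) * PI^7 + (-7/60) * PI^9 + (-221/40320) * PI^11) * (t^1 * (1-t)^16) + ((1375) * PI^3 + (497/48) * PI^5 + (-25339/5760) * PI^7 + (-2201/2880) * PI^9 + (-2377/71680) * PI^11 + (17/1935360) * PI^13) * (t^2 * (1-t)^15) + ((11125/2) * PI^3 + (9211/192) * PI^5 + (-14819/768) * PI^7 + (-7165/2304) * PI^9 + (-31963/258048) * PI^11 + (187/1935360) * PI^13) * (t^3 * (1-t)^14) + ((15673) * PI^3 + (14857/96) * PI^5 + (-1360841/23040) *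 PI^7 + (-5677243/645120) * PI^9 + (-353309/1105920) * PI^11 + (76021/154828800) * PI^13 + (-17/232243200) * PI^15) * (t^4 * (1-t)^13) + ((130453/4) * PI^3 + (71359/192) * PI^5 + (-3084707/23040) * PI^7 + (-23701981/1290240) * PI^9 + (-1333187/2211840) * PI^11 + (94627/61931520) * PI^13 + (-17/25804800) * PI^15) * (t^5 * (1-t)^12) + ((3317797/64) * PI^3 + (16603/24) * PI^5 + (-2680703/11520) * PI^7 + (-25181179/860160) * PI^9 + (-399237829/464486400) * PI^11 + (74631/22937600) * PI^13 + (-10057/3715891200) * PI^15 + (17/52022476800) * PI^17) * (t^6 * (1-t)^11) + ((8217847/128) * PI^3 + (24553/24) * PI^5 + (-3648959/11520) * PI^7 + (-62544079/1720320) * PI^9 + (-292163317/309657600) * PI^11 + (6214847/1238630400) * PI^13 + (-49919/7431782400) * PI^15 + (17/7431782400) * PI^17) * (t^7 * (1-t)^10) + ((16023051/256) * PI^3 + (1248329/1024) * PI^5 + (-7876723/23040) * PI^7 + (-1148137/32256) * PI^9 + (-1493687513/1857945600) * PI^11 + (716239/123863040) * PI^13 + (-500737/44590694400) * PI^15 + (89791/12485394432000) * PI^17 + (-17/18728091648000) * PI^19) * (t^8 * (1-t)^9) + ((24663649/512) * PI^3 + (2411487/2048) * PI^5 + (-339019/1152) * PI^7 + (-15830547/573440) * PI^9 + (-494000971/928972800) * PI^11 + (207029033/40874803200) * PI^13 + (-1190327/89181388800) * PI^15 + (15937/1189085184000) * PI^17 + (-17/3745618329600) * PI^19) * (t^9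 * (1-t)^8) + ((116591/4) * PI^3 + (11316629/12288) * PI^5 + (-14900063/73728) * PI^7 + (-3122917/184320) * PI^9 + (-4490669/16588800) * PI^11 + (36999131/10899947520) * PI^13 + (-344713/29727129600) * PI^15 + (821467/49941577728000) * PI^17 + (-1003/99883155456000) * PI^19) * (t^10 * (1-t)^7) + ((1753717/128) * PI^3 + (14227415/24576) * PI^5 + (-81199729/737280) * PI^7 + (-8433989/1032192) * PI^9 + (-1532939/14745600) * PI^11 + (31561099/18166579200) * PI^13 + (-190030271/25505877196800) * PI^15 + (199123/14269022208000) * PI^17 + (-221/17122826649600) * PI^19) * (t^11 * (1-t)^6) + ((626063/128) * PI^3 + (885557/3072) * PI^5 + (-69414437/1474560) * PI^7 + (-252128069/82575360) * PI^9 + (-256247/8847360) * PI^11 + (109860073/163499212800) * PI^13 + (-16403753/4637432217600) * PI^15 + (238267/28538044416000) * PI^17 + (-1819/171228266496000) * PI^19) * (t^12 * (1-t)^5) + ((326291/256) * PI^3 + (909911/8192) * PI^5 + (-9120947/589824) * PI^7 + (-28523039/33030144) * PI^9 + (-10016119/1857945600) * PI^11 + (2095633/10899947520) * PI^13 + (-83281837/68015672524800) * PI^15 + (1406851/399532621824000) * PI^17 + (-221/38050725888000) * PI^19) * (t^13 * (1-t)^4) + ((14421/64) * PI^3 + (392201/12288) * PI^5 + (-347863/92160) * PI^7 + (-58774427/330301440) * PI^9 + (-15628891/29727129600) * PI^11 + (2138077/54499737600) * PI^13 + (-5101879/17003918131200) * PI^15 + (39017/38050725888000) * PI^17 + (-289/136982613196800)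 * PI^19) * (t^14 * (1-t)^3) + ((1469/64) * PI^3 + (158129/24576) * PI^5 + (-190535/294912) * PI^7 + (-3310165/132120576) * PI^9 + (95521/8493465600) * PI^11 + (175177/32699842560) * PI^13 + (-334759/6801567252480) * PI^15 + (313567/1598130487296000) * PI^17 + (-4709/9588782923776000) * PI^19) * (t^15 * (1-t)^2) + ((175/256) * PI^3 + (4985/6144) * PI^5 + (-34097/491520) * PI^7 + (-176371/82575360) * PI^9 + (1041323/118908518400) * PI^11 + (23641/54499737600) * PI^13 + (-2741/566797271040) * PI^15 + (211/9512681472000) * PI^17 + (-17/255700877967360) * PI^19) * (t^16 * (1-t)^1) + ((-31/512) * PI^3 + (1183/24576) * PI^5 + (-10399/2949120) * PI^7 + (-54113/660602880) * PI^9 + (161249/237817036800) * PI^11 + (281/18166579200) * PI^13 + (-1621/7557296947200) * PI^15 + (199/177570054144000) * PI^17 + (-17/4261681299456000) * PI^19) * (t^17 * (1-t)^0)).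
Proof.
unfold P_low, Q_up, S13, S11, C12, C10. field. exact PI_neq0.
Qed.

Lemma BU_bern (t:R) : 0 < t -> t <= 1 -> 0 < ((51/4) * PI^3 + (-31/24) * PI^5) * (t^0 * (1-t)^18) + ((12013/64) * PI^3 + (-233/12) * PI^5 + (13/320) * PI^7) * (t^1 * (1-t)^17) + ((166559/128) * PI^3 + (-52949/384) * PI^5 + (1769/2880) * PI^7) * (t^2 * (1-t)^16) + ((1445409/256) * PI^3 + (-1888265/3072) * PI^5 + (199621/46080) * PI^7 + (-829/967680) * PI^9) * (t^3 * (1-t)^15) + ((8801839/512) * PI^3 + (-11842639/6144) * PI^5 + (1745951/92160) * PI^7 + (-21121/1935360) * PI^9) * (t^4 * (1-t)^14) + ((39964775/1024) * PI^3 + (-55490965/12288) * PI^5 + (7074997/122880) * PI^7 + (-47513/737280) * PI^9 + (1667/232243200) * PI^11) * (t^5 * (1-t)^13) + ((140331529/2048) * PI^3 + (-67121369/8192) * PI^5 + (95203157/737280) * PI^7 + (-201331/860160) * PI^9 + (17713/232243200) * PI^11) * (t^6 * (1-t)^12) + ((390031383/4096) * PI^3 + (-578787499/49152) * PI^5 + (326469719/1474560) * PI^7 + (-16099039/27525120) * PI^9 + (1379963/3715891200) * PI^11 + (-197/6131220480) * PI^13) * (t^7 * (1-t)^11) + ((870909549/8192) * PI^3 + (-445476447/32768) * PI^5 + (97182497/327680) * PI^7 + (-175936531/165150720) * PI^9 + (2718343/2477260800) * PI^11 + (-751/2724986880) * PI^13) * (t^8 * (1-t)^10) + ((98520581/1024)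 * PI^3 + (-832941949/65536) * PI^5 + (1854221713/5898240) * PI^7 + (-1448008003/990904320) * PI^9 + (2610607/1189085184) * PI^11 + (-174173/163499212800) * PI^13 + (263/2942985830400) * PI^15) * (t^9 * (1-t)^9) + ((580524641/8192) * PI^3 + (-1265002175/131072) * PI^5 + (3129800279/11796480) * PI^7 + (-3046926109/1981808640) * PI^9 + (186757237/59454259200) * PI^11 + (-4806763/1961990553600) * PI^13 + (1723/2942985830400) * PI^15) * (t^10 * (1-t)^8) + ((86954645/2048) * PI^3 + (-24343861/4096) * PI^5 + (4208459447/23592960) * PI^7 + (-550989317/440401920) * PI^9 + (56171257/16986931200) * PI^11 + (-19491359/5231974809600) * PI^13 + (2941/1743991603200) * PI^15 + (-1/5885971660800) * PI^17) * (t^11 * (1-t)^7) + ((84289557/4096) * PI^3 + (-96623503/32768) * PI^5 + (1495022927/15728640) * PI^7 + (-2081188217/2642411520) * PI^9 + (123352781/47563407360) * PI^11 + (-123478907/31391848857600) * PI^13 + (7547/2690729902080) * PI^15 + (-1/1307993702400) * PI^17) * (t^12 * (1-t)^6) + ((1020601/128) * PI^3 + (-114406691/98304) * PI^5 + (46808459/1179648) * PI^7 + (-2011108759/5284823040) * PI^9 + (144170273/95126814720) * PI^11 + (-184769617/62783697715200) * PI^13 + (559393/188351093145600) * PI^15 + (-23/15695924428800) * PI^17) * (t^13 * (1-t)^5) + ((9909287/4096) * PI^3 + (-70329839/196608) * PI^5 + (600015847/47185920) * PI^7 + (-1465263053/10569646080) * PI^9 + (124020503/190253629440) * PI^11 +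 (-195946591/125567395430400) * PI^13 + (260789/125567395430400) * PI^15 + (-73/47087773286400) * PI^17) * (t^14 * (1-t)^4) + ((2274407/4096) * PI^3 + (-4064843/49152) * PI^5 + (23781953/7864320) * PI^7 + (-73079183/1981808640) * PI^9 + (381709591/1902536294400) * PI^11 + (-16038907/27903865651200) * PI^13 + (144559/150680874516480) * PI^15 + (-491/502269581721600) * PI^17) * (t^15 * (1-t)^3) + ((744153/8192) * PI^3 + (-333073/24576) * PI^5 + (2639811/5242880) * PI^7 + (-107261471/15854469120) * PI^9 + (159267581/3805072588800) * PI^11 + (-70369877/502269581721600) * PI^13 + (85081/301361749032960) * PI^15 + (-41/111615462604800) * PI^17) * (t^16 * (1-t)^2) + ((4839/512) * PI^3 + (-276395/196608) * PI^5 + (619091/11796480) * PI^7 + (-578407/754974720) * PI^9 + (2524499/475634073600) * PI^11 + (-20438263/1004539163443200) * PI^13 + (6893/143505594777600) * PI^15 + (-17/223230925209600) * PI^17) * (t^17 * (1-t)^1) + ((3853/8192) * PI^3 + (-27325/393216) * PI^5 + (121861/47185920) * PI^7 + (-427117/10569646080) * PI^9 + (1176373/3805072588800) * PI^11 + (-2680669/2009078326886400) * PI^13 + (2411/669692775628800) * PI^15 + (-1/148820616806400) * PI^17) * (t^18 * (1-t)^0).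
Proof.
intros ht0 ht1. pose proof pow_bounds as PB. destruct_all.
apply Rplus_le_lt_0_compat; [repeat apply Rplus_le_le_0_compat|].
  - apply Rmult_le_pos; [lra| apply Rmult_le_pos; apply pow_le; lra].
  - apply Rmult_le_pos; [lra| apply Rmult_le_pos; apply pow_le; lra].
  - apply Rmult_le_pos; [lra| apply Rmult_le_pos; apply pow_le; lra].
  - apply Rmult_le_pos; [lra| apply Rmult_le_pos; apply pow_le; lra].
  - apply Rmult_le_pos; [lra| apply Rmult_le_pos; apply pow_le; lra].
  - apply Rmult_le_pos; [lra| apply Rmult_le_pos; apply pow_le; lra].
  - apply Rmult_le_pos; [lra| apply Rmult_le_pos; apply pow_le; lra].
  - apply Rmult_le_pos; [lra| apply Rmult_le_pos; apply pow_le; lra].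
  - apply Rmult_le_pos; [lra| apply Rmult_le_pos; apply pow_le; lra].
  - apply Rmult_le_pos; [lra| apply Rmult_le_pos; apply pow_le; lra].
  - apply Rmult_le_pos; [lra| apply Rmult_le_pos; apply pow_le; lra].
  - apply Rmult_le_pos; [lra| apply Rmult_le_pos; apply pow_le; lra].
  - apply Rmult_le_pos; [lra| apply Rmult_le_pos; apply pow_le; lra].
  - apply Rmult_le_pos; [lra| apply Rmult_le_pos; apply pow_le; lra].
  - apply Rmult_le_pos; [lra| apply Rmult_le_pos; apply pow_le; lra].
  - apply Rmult_le_pos; [lra| apply Rmult_le_pos; apply pow_le; lra].
  - apply Rmult_le_pos; [lra| apply Rmult_le_pos; apply pow_le; lra].
  - apply Rmult_le_pos; [lra| apply Rmult_le_pos; apply pow_le; lra].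
  - apply Rmult_lt_0_compat; [lra| apply Rmult_lt_0_compat; [apply pow_lt; lra| simpl; lra]].
Qed.

Lemma BU_id (t:R) : let v := PI*t/2 in let x := (PI-v)/2 in Q_up x * (1 - C12 v) - (PI^2-4*x^2)^2 * (PI - v - S11 v) = (PI*t/2)^2 * t^3 * (((51/4) * PI^3 + (-31/24) * PI^5) * (t^0 * (1-t)^18) + ((12013/64) * PI^3 + (-233/12) * PI^5 + (13/320) * PI^7) * (t^1 * (1-t)^17) + ((166559/128) * PI^3 + (-52949/384) * PI^5 + (1769/2880) * PI^7) * (t^2 * (1-t)^16) + ((1445409/256) * PI^3 + (-1888265/3072) * PI^5 + (199621/46080) * PI^7 + (-829/967680) * PI^9) * (t^3 * (1-t)^15) + ((8801839/512) * PI^3 + (-11842639/6144) * PI^5 + (1745951/92160) * PI^7 + (-21121/1935360) * PI^9) * (t^4 * (1-t)^14) + ((39964775/1024) * PI^3 + (-55490965/12288) * PI^5 + (7074997/122880) * PI^7 + (-47513/737280) * PI^9 + (1667/232243200) * PI^11) * (t^5 * (1-t)^13) + ((140331529/2048) * PI^3 + (-67121369/8192) * PI^5 + (95203157/737280) * PI^7 + (-201331/860160) * PI^9 + (17713/232243200) * PI^11) * (t^6 * (1-t)^12) + ((390031383/4096) * PI^3 + (-578787499/49152) * PI^5 + (326469719/1474560) * PI^7 + (-16099039/27525120) * PI^9 + (1379963/3715891200) * PI^11 + (-197/6131220480) * PI^13) * (t^7 * (1-t)^11) + ((870909549/8192) * PI^3 + (-445476447/32768) * PI^5 + (97182497/327680)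 * PI^7 + (-175936531/165150720) * PI^9 + (2718343/2477260800) * PI^11 + (-751/2724986880) * PI^13) * (t^8 * (1-t)^10) + ((98520581/1024) * PI^3 + (-832941949/65536) * PI^5 + (1854221713/5898240) * PI^7 + (-1448008003/990904320) * PI^9 + (2610607/1189085184) * PI^11 + (-174173/163499212800) * PI^13 + (263/2942985830400) * PI^15) * (t^9 * (1-t)^9) + ((580524641/8192) * PI^3 + (-1265002175/131072) * PI^5 + (3129800279/11796480) * PI^7 + (-3046926109/1981808640) * PI^9 + (186757237/59454259200) * PI^11 + (-4806763/1961990553600) * PI^13 + (1723/2942985830400) * PI^15) * (t^10 * (1-t)^8) + ((86954645/2048) * PI^3 + (-24343861/4096) * PI^5 + (4208459447/23592960) * PI^7 + (-550989317/440401920) * PI^9 + (56171257/16986931200) * PI^11 + (-19491359/5231974809600) * PI^13 + (2941/1743991603200) * PI^15 + (-1/5885971660800) * PI^17) * (t^11 * (1-t)^7) + ((84289557/4096) * PI^3 + (-96623503/32768) * PI^5 + (1495022927/15728640) * PI^7 + (-2081188217/2642411520) * PI^9 + (123352781/47563407360) * PI^11 + (-123478907/31391848857600) * PI^13 + (7547/2690729902080) * PI^15 + (-1/1307993702400) * PI^17) * (t^12 * (1-t)^6) + ((1020601/128) * PI^3 + (-114406691/98304) * PI^5 + (46808459/1179648) * PI^7 + (-2011108759/5284823040) * PI^9 + (144170273/95126814720) * PI^11 + (-184769617/62783697715200) * PI^13 + (559393/188351093145600) * PI^15 + (-23/15695924428800) * PI^17) * (t^13 * (1-t)^5) + ((9909287/4096)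 * PI^3 + (-70329839/196608) * PI^5 + (600015847/47185920) * PI^7 + (-1465263053/10569646080) * PI^9 + (124020503/190253629440) * PI^11 + (-195946591/125567395430400) * PI^13 + (260789/125567395430400) * PI^15 + (-73/47087773286400) * PI^17) * (t^14 * (1-t)^4) + ((2274407/4096) * PI^3 + (-4064843/49152) * PI^5 + (23781953/7864320) * PI^7 + (-73079183/1981808640) * PI^9 + (381709591/1902536294400) * PI^11 + (-16038907/27903865651200) * PI^13 + (144559/150680874516480) * PI^15 + (-491/502269581721600) * PI^17) * (t^15 * (1-t)^3) + ((744153/8192) * PI^3 + (-333073/24576) * PI^5 + (2639811/5242880) * PI^7 + (-107261471/15854469120) * PI^9 + (159267581/3805072588800) * PI^11 + (-70369877/502269581721600) * PI^13 + (85081/301361749032960) * PI^15 + (-41/111615462604800) * PI^17) * (t^16 * (1-t)^2) + ((4839/512) * PI^3 + (-276395/196608) * PI^5 + (619091/11796480) * PI^7 + (-578407/754974720) * PI^9 + (2524499/475634073600) * PI^11 + (-20438263/1004539163443200) * PI^13 + (6893/143505594777600) * PI^15 + (-17/223230925209600) * PI^17) * (t^17 * (1-t)^1) + ((3853/8192) * PI^3 + (-27325/393216) * PI^5 + (121861/47185920) * PI^7 + (-427117/10569646080) * PI^9 + (1176373/3805072588800) * PI^11 + (-2680669/2009078326886400) * PI^13 + (2411/669692775628800) * PI^15 + (-1/148820616806400) * PI^17) * (t^18 * (1-t)^0)).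
Proof.
unfold P_low, Q_up, S13, S11, C12, C10. field. exact PI_neq0.
Qed.

Lemma PP_bern (t:R) : 0 < t -> t <= 1 -> 0 < ((1/12) * PI^7) * (t^0 * (1-t)^8) + ((2/3) * PI^7) * (t^1 * (1-t)^7) + ((13/6) * PI^7 + (1/60) * PI^9) * (t^2 * (1-t)^6) + ((11/3) * PI^7 + (1/10) * PI^9) * (t^3 * (1-t)^5) + ((16) * PI^3 + (41/12) * PI^7 + (13/60) * PI^9 + (17/20160) * PI^11) * (t^4 * (1-t)^4) + ((64) * PI^3 + (5/3) * PI^7 + (1/5) * PI^9 + (17/5040) * PI^11) * (t^5 * (1-t)^3) + ((96) * PI^3 + (1/3) * PI^7 + (1/15) * PI^9 + (17/5040) * PI^11) * (t^6 * (1-t)^2) + ((64) * PI^3) * (t^7 * (1-t)^1) + ((8) * PI^3) * (t^8 * (1-t)^0).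
Proof.
intros ht0 ht1. pose proof pow_bounds as PB. destruct_all.
apply Rplus_le_lt_0_compat; [repeat apply Rplus_le_le_0_compat|].
  - apply Rmult_le_pos; [lra| apply Rmult_le_pos; apply pow_le; lra].
  - apply Rmult_le_pos; [lra| apply Rmult_le_pos; apply pow_le; lra].
  - apply Rmult_le_pos; [lra| apply Rmult_le_pos; apply pow_le; lra].
  - apply Rmult_le_pos; [lra| apply Rmult_le_pos; apply pow_le; lra].
  - apply Rmult_le_pos; [lra| apply Rmult_le_pos; apply pow_le; lra].
  - apply Rmult_le_pos; [lra| apply Rmult_le_pos; apply pow_le; lra].
  - apply Rmult_le_pos; [lra| apply Rmult_le_pos; apply pow_le; lra].
  - apply Rmult_le_pos; [lra| apply Rmult_le_pos; apply pow_le; lra].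
  - apply Rmult_lt_0_compat; [lra| apply Rmult_lt_0_compat; [apply pow_lt; lra| simpl; lra]].
Qed.

Lemma PP_id (t:R) : let x := PI*t/2 in P_low x = t^3 * (((1/12) * PI^7) * (t^0 * (1-t)^8) + ((2/3) * PI^7) * (t^1 * (1-t)^7) + ((13/6) * PI^7 + (1/60) * PI^9) * (t^2 * (1-t)^6) + ((11/3) * PI^7 + (1/10) * PI^9) * (t^3 * (1-t)^5) + ((16) * PI^3 + (41/12) * PI^7 + (13/60) * PI^9 + (17/20160) * PI^11) * (t^4 * (1-t)^4) + ((64) * PI^3 + (5/3) * PI^7 + (1/5) * PI^9 + (17/5040) * PI^11) * (t^5 * (1-t)^3) + ((96) * PI^3 + (1/3) * PI^7 + (1/15) * PI^9 + (17/5040) * PI^11) * (t^6 * (1-t)^2) + ((64) * PI^3) * (t^7 * (1-t)^1) + ((8) * PI^3) * (t^8 * (1-t)^0)).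
Proof.
unfold P_low, Q_up, S13, S11, C12, C10. field. exact PI_neq0.
Qed.

Lemma QQ_bern (t:R) : 0 < t -> t <= 1 -> 0 < ((1/12) * PI^7) * (t^0 * (1-t)^8) + ((2/3) * PI^7) * (t^1 * (1-t)^7) + ((52) * PI^3 + (-2) * PI^5 + (2) * PI^7) * (t^2 * (1-t)^6) + ((312) * PI^3 + (-12) * PI^5 + (8/3) * PI^7) * (t^3 * (1-t)^5) + ((1341/2) * PI^3 + (-143/6) * PI^5 + (4/3) * PI^7) * (t^4 * (1-t)^4) + ((602) * PI^3 + (-46/3) * PI^5) * (t^5 * (1-t)^3) + ((218) * PI^3 + (2/3) * PI^5) * (t^6 * (1-t)^2) + ((64) * PI^3) * (t^7 * (1-t)^1) + ((8) * PI^3) * (t^8 * (1-t)^0).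
Proof.
intros ht0 ht1. pose proof pow_bounds as PB. destruct_all.
apply Rplus_le_lt_0_compat; [repeat apply Rplus_le_le_0_compat|].
  - apply Rmult_le_pos; [lra| apply Rmult_le_pos; apply pow_le; lra].
  - apply Rmult_le_pos; [lra| apply Rmult_le_pos; apply pow_le; lra].
  - apply Rmult_le_pos; [lra| apply Rmult_le_pos; apply pow_le; lra].
  - apply Rmult_le_pos; [lra| apply Rmult_le_pos; apply pow_le; lra].
  - apply Rmult_le_pos; [lra| apply Rmult_le_pos; apply pow_le; lra].
  - apply Rmult_le_pos; [lra| apply Rmult_le_pos; apply pow_le; lra].
  - apply Rmult_le_pos; [lra| apply Rmult_le_pos; apply pow_le; lra].
  - apply Rmult_le_pos; [lra| apply Rmult_le_pos; apply pow_le; lra].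
  - apply Rmult_lt_0_compat; [lra| apply Rmult_lt_0_compat; [apply pow_lt; lra| simpl; lra]].
Qed.

Lemma QQ_id (t:R) : let x := PI*t/2 in Q_up x = t^3 * (((1/12) * PI^7) * (t^0 * (1-t)^8) + ((2/3) * PI^7) * (t^1 * (1-t)^7) + ((52) * PI^3 + (-2) * PI^5 + (2) * PI^7) * (t^2 * (1-t)^6) + ((312) * PI^3 + (-12) * PI^5 + (8/3) * PI^7) * (t^3 * (1-t)^5) + ((1341/2) * PI^3 + (-143/6) * PI^5 + (4/3) * PI^7) * (t^4 * (1-t)^4) + ((602) * PI^3 + (-46/3) * PI^5) * (t^5 * (1-t)^3) + ((218) * PI^3 + (2/3) * PI^5) * (t^6 * (1-t)^2) + ((64) * PI^3) * (t^7 * (1-t)^1) + ((8) * PI^3) * (t^8 * (1-t)^0)).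
Proof.
unfold P_low, Q_up, S13, S11, C12, C10. field. exact PI_neq0.
Qed.

Lemma div_le1 a b : 0 < b -> a <= b -> a/b <= 1.
Proof. intros. replace 1 with (b/b) by (field; lra). unfold Rdiv. apply Rmult_le_compat_r; [left; apply Rinv_0_lt_compat; lra | lra]. Qed.
Lemma le_sub0 a b : a <= b -> 0 <= b - a. Proof. intros; lra. Qed.

Lemma P_nonneg x : 0 < x -> x <= PI/2 -> 0 <= P_low x.
Proof.
intros h0 h1. pose proof PI_RGT_0 as hp.
pose proof (PP_id (2*x/PI)) as E. pose proof (PP_bern (2*x/PI)) as B. cbv zeta in E.
replace (PI * (2*x/PI) / 2) with x in E by (field; lra).
assert (0 < 2*x/PI) by (apply Rdiv_lt_0_compat; lra).
assert (2*x/PI <= 1) by (apply div_le1; lra).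
rewrite E. apply Rmult_le_pos; [apply pow_le; lra| left; apply B; lra].
Qed.

Lemma Q_nonneg x : 0 < x -> x <= PI/2 -> 0 <= Q_up x.
Proof.
intros h0 h1. pose proof PI_RGT_0 as hp.
pose proof (QQ_id (2*x/PI)) as E. pose proof (QQ_bern (2*x/PI)) as B. cbv zeta in E.
replace (PI * (2*x/PI) / 2) with x in E by (field; lra).
assert (0 < 2*x/PI) by (apply Rdiv_lt_0_compat; lra).
assert (2*x/PI <= 1) by (apply div_le1; lra).
rewrite E. apply Rmult_le_pos; [apply pow_le; lra| left; apply B; lra].
Qed.

Lemma AL_main t : 0 < t -> t <= 1 ->
  P_low (PI*t/4) * (1 + cos (PI*t/2)) < (PI^2-4*(PI*t/4)^2)^2 * (PI*t/2 - sin (PI*t/2)).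
Proof.
intros h0 h1. pose proof PI_RGT_0 as hp.
pose proof (AL_id t) as E. pose proof (AL_bern t h0 h1) as B. cbv zeta in E.
assert (hs : sin (PI*t/2) <= S13 (PI*t/2)) by (apply sin_up; nra).
assert (hc : cos (PI*t/2) <= C12 (PI*t/2)) by (apply cos_up; nra).
assert (hP : 0 <= P_low (PI*t/4)) by (apply P_nonneg; nra).
assert (hD : 0 <= (PI^2-4*(PI*t/4)^2)^2) by (apply pow2_ge_0).
assert (hT : 0 < t^7) by (apply pow_lt; lra).
assert (h1' := Rmult_le_pos _ _ hD (le_sub0 _ _ hs)).
assert (h2' := Rmult_le_pos _ _ hP (le_sub0 _ _ hc)).
assert (h3 := Rmult_lt_0_compat _ _ hT B). rewrite <- E in h3.
lra.
Qed.

Lemma AU_main t : 0 < t -> t <= 1 ->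
  (PI^2-4*(PI*t/4)^2)^2 * (PI*t/2 - sin (PI*t/2)) < Q_up (PI*t/4) * (1 + cos (PI*t/2)).
Proof.
intros h0 h1. pose proof PI_RGT_0 as hp.
pose proof (AU_id t) as E. pose proof (AU_bern t h0 h1) as B. cbv zeta in E.
assert (hs : S11 (PI*t/2) <= sin (PI*t/2)) by (apply sin_lo; nra).
assert (hc : C10 (PI*t/2) <= cos (PI*t/2)) by (apply cos_lo; nra).
assert (hP : 0 <= Q_up (PI*t/4)) by (apply Q_nonneg; nra).
assert (hD : 0 <= (PI^2-4*(PI*t/4)^2)^2) by (apply pow2_ge_0).
assert (hT : 0 < t^5) by (apply pow_lt; lra).
assert (h1' := Rmult_le_pos _ _ hD (le_sub0 _ _ hs)).
assert (h2' := Rmult_le_pos _ _ hP (le_sub0 _ _ hc)).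
assert (h3 := Rmult_lt_0_compat _ _ hT B). rewrite <- E in h3.
lra.
Qed.

Lemma BL_main t : 0 < t -> t <= 1 ->
  P_low ((PI - PI*t/2)/2) * (1 - cos (PI*t/2)) < (PI^2-4*((PI - PI*t/2)/2)^2)^2 * (PI - PI*t/2 - sin (PI*t/2)).
Proof.
intros h0 h1. pose proof PI_RGT_0 as hp.
pose proof (BL_id t) as E. pose proof (BL_bern t h0 h1) as B. cbv zeta in E.
assert (hs : sin (PI*t/2) <= S13 (PI*t/2)) by (apply sin_up; nra).
assert (hc : C10 (PI*t/2) <= cos (PI*t/2)) by (apply cos_lo; nra).
assert (hP : 0 <= P_low ((PI - PI*t/2)/2)) by (apply P_nonneg; nra).
assert (hD : 0 <= (PI^2-4*((PI - PI*t/2)/2)^2)^2) by (apply pow2_ge_0).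
assert (hT : 0 < (PI*t/2)^2 * t^2) by (apply Rmult_lt_0_compat; apply pow_lt; nra).
assert (h1' := Rmult_le_pos _ _ hD (le_sub0 _ _ hs)).
assert (h2' := Rmult_le_pos _ _ hP (le_sub0 _ _ hc)).
assert (h3 := Rmult_lt_0_compat _ _ hT B). rewrite <- E in h3.
lra.
Qed.

Lemma BU_main t : 0 < t -> t <= 1 ->
  (PI^2-4*((PI - PI*t/2)/2)^2)^2 * (PI - PI*t/2 - sin (PI*t/2)) < Q_up ((PI - PI*t/2)/2) * (1 - cos (PI*t/2)).
Proof.
intros h0 h1. pose proof PI_RGT_0 as hp.
pose proof (BU_id t) as E. pose proof (BU_bern t h0 h1) as B. cbv zeta in E.
assert (hs : S11 (PI*t/2) <= sin (PI*t/2)) by (apply sin_lo; nra).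
assert (hc : cos (PI*t/2) <= C12 (PI*t/2)) by (apply cos_up; nra).
assert (hP : 0 <= Q_up ((PI - PI*t/2)/2)) by (apply Q_nonneg; nra).
assert (hD : 0 <= (PI^2-4*((PI - PI*t/2)/2)^2)^2) by (apply pow2_ge_0).
assert (hT : 0 < (PI*t/2)^2 * t^3) by (apply Rmult_lt_0_compat; apply pow_lt; nra).
assert (h1' := Rmult_le_pos _ _ hD (le_sub0 _ _ hs)).
assert (h2' := Rmult_le_pos _ _ hP (le_sub0 _ _ hc)).
assert (h3 := Rmult_lt_0_compat _ _ hT B). rewrite <- E in h3.
lra.
Qed.

Lemma both_u x : 0 < x -> x < PI/2 ->
  P_low x * (1 + cos (2*x)) < (PI^2-4*x^2)^2 * (2*x - sin (2*x)) /\
  (PI^2-4*x^2)^2 * (2*x - sin (2*x)) < Q_up x * (1 + cos (2*x)).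
Proof.
intros h0 h1. pose proof PI_RGT_0 as hp.
destruct (Rle_or_lt x (PI/4)) as [hx|hx].
- assert (0 < 4*x/PI) by (apply Rdiv_lt_0_compat; lra).
  assert (4*x/PI <= 1) by (apply div_le1; lra).
  pose proof (AL_main (4*x/PI)) as HL. pose proof (AU_main (4*x/PI)) as HU.
  replace (PI * (4*x/PI) / 4) with x in HL, HU by (field; lra).
  replace (PI * (4*x/PI) / 2) with (2*x) in HL, HU by (field; lra).
  split; [apply HL|apply HU]; lra.
- assert (0 < 2*(PI-2*x)/PI) by (apply Rdiv_lt_0_compat; lra).
  assert (2*(PI-2*x)/PI <= 1) by (apply div_le1; lra).
  pose proof (BL_main (2*(PI-2*x)/PI)) as HL. pose proof (BU_main (2*(PI-2*x)/PI)) as HU.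
  replace (PI * (2*(PI-2*x)/PI) / 2) with (PI - 2*x) in HL, HU by (field; lra).
  replace ((PI - (PI - 2*x))/2) with x in HL, HU by field.
  replace (PI - (PI - 2*x) - sin (PI - 2*x)) with (2*x - sin (2*x)) in HL, HU by (rewrite sin_PI_x; ring).
  replace (1 - cos (PI - 2*x)) with (1 + cos (2*x)) in HL, HU by (rewrite cos_minus, cos_PI, sin_PI; ring).
  split; [apply HL|apply HU]; lra.
Qed.

Lemma div_lt_cross a b c d : 0 < b -> 0 < d -> a*d < c*b -> a/b < c/d.
Proof.
intros hb hd h. apply Rminus_gt_0_lt.
replace (c/d - a/b) with ((c*b - a*d)/(b*d)) by (field; lra).
apply Rdiv_lt_0_compat; nra.
Qed.

Theorem mainTheorem19 (x : R) (hx0 : 0 < x) (hx1 : x < PI / 2) :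
  P_low x / (PI ^ 2 - 4 * x ^ 2) ^ 2 < x * sec2 x - tan x /\
  x * sec2 x - tan x < Q_up x / (PI ^ 2 - 4 * x ^ 2) ^ 2.
Proof.
pose proof PI_RGT_0 as hp.
assert (hc : 0 < cos x) by (apply cos_gt_0; lra).
assert (hD : 0 < (PI ^ 2 - 4 * x ^ 2) ^ 2).
{ apply pow_lt. nra. }
assert (E : x * sec2 x - tan x = (x - sin x * cos x) / cos x ^ 2).
{ unfold sec2, tan. field. lra. }
assert (hc2 : 0 < cos x ^ 2) by (apply pow_lt; lra).
destruct (both_u x hx0 hx1) as [HL HU].
rewrite sin_2a, cos_2a_cos in HL, HU.
rewrite E. split.
- apply div_lt_cross; [lra|lra|]. nra.
- apply div_lt_cross; [lra|lra|]. nra.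
Qed.
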